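(* Let $\eta_3=\int_1^\infty\frac{\mathrm{d}t}{\sqrt{t^6-1}}$ and let $\mathrm{cleafh}_3:(-\eta_3,\eta_3)\to\mathbb{R}$ be the hyperbolic leaf function of basis $3$. For every real $l$ with $2l\in(-\eta_3,\eta_3)$, writing $C=\mathrm{cleafh}_3(l)$, $$\mathrm{cleafh}_3(2l)=\frac{2C^2+2C^4-1}{\sqrt{1+8C^2+8C^6-8C^8}}.$$
   Context: For a natural number $n$, let $\eta_n=\int_1^\infty\frac{\mathrm{d}t}{\sqrt{t^{2n}-1}}$. The hyperbolic leaf function $\mathrm{cleafh}_n$ is the solution $r(l)$ on $(-\eta_n,\eta_n)$ of $\frac{\mathrm{d}^2r}{\mathrm{d}l^2}=n\,r^{2n-1}$ with $r(0)=1$, $r'(0)=0$; it is even, and for $l\ge0$ it is the inverse of $r\mapsto\int_1^r\frac{\mathrm{d}t}{\sqrt{t^{2n}-1}}$, $r\ge1$. *)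

(* Defs.v *)
From Stdlib Require Import Reals.
From Coquelicot Require Import Coquelicot.
Open Scope R_scope.

Definition eta (n : nat) : R :=
  RInt_gen (fun t => / sqrt (t ^ (2 * n) - 1)) (at_right 1) (Rbar_locally p_infty).

Definition is_cleafh (n : nat) (r : R -> R) : Prop :=
  r 0 = 1 /\ Derive r 0 = 0 /\
  (forall l, - eta n < l < eta n ->
     ex_derive r l /\ is_derive (Derive r) l (INR n * r l ^ (2 * n - 1))).

(* Main.v *)
Require Import Defs.
From Stdlib Require Import Reals Lra Psatz.
From Coquelicot Require Import Coquelicot.
Open Scope R_scope.

Lemma Dval (f : R -> R) (x l l' : R) : is_derive f x l -> l = l' -> is_derive f x l'.
Proof. intros H ->; exact H. Qed.

Lemma Dmul (f g : R -> R) (x a b : R) : is_derive f x a -> is_derive g x b ->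
  is_derive (fun t => f t * g t) x (a * g x + f x * b).
Proof.
  intros Ha Hb. eapply Dval. apply (is_derive_mult f g x a b Ha Hb).
  intros; apply Rmult_comm. reflexivity.
Qed.

Lemma Dplus (f g : R -> R) (x a b : R) : is_derive f x a -> is_derive g x b ->
  is_derive (fun t => f t + g t) x (a + b).
Proof. intros Ha Hb. apply (is_derive_plus f g x a b Ha Hb). Qed.

Lemma Dminus (f g : R -> R) (x a b : R) : is_derive f x a -> is_derive g x b ->
  is_derive (fun t => f t - g t) x (a - b).
Proof. intros Ha Hb. apply (is_derive_minus f g x a b Ha Hb). Qed.

Lemma Dopp (f : R -> R) (x a : R) : is_derive f x a -> is_derive (fun t => - f t) x (- a).
Proof. intros H. apply (is_derive_opp f x a H). Qed.

Lemma Dcomp (F f : R -> R) (x dF a : R) : is_derive F (f x) dF -> is_derive f x a ->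
  is_derive (fun t => F (f t)) x (a * dF).
Proof. intros H1 H2. apply (is_derive_comp F f x dF a H1 H2). Qed.

Lemma decr (f f' : R -> R) a b : a <= b ->
  (forall x, a <= x <= b -> is_derive f x (f' x)) ->
  (forall x, a <= x <= b -> f' x <= 0) -> f b <= f a.
Proof.
  intros Hab Hd Hn. destruct (Req_dec a b) as [->|Hne]; [lra|].
  destruct (MVT_cor2 f f' a b) as [c [Hc1 Hc2]]; [lra| |].
  - intros c Hc. apply is_derive_Reals. now apply Hd.
  - assert (f' c <= 0) by (apply Hn; lra). nra.
Qed.

Definition Rf V := (V^4+8*V^3+8*V-8)/(V^2-2*V-2)^2.
Definition Rp V := -12*(V^4+2*V^3+6*V^2-4*V+4)/(V^2-2*V-2)^3.
Definition Rpd V := (-12*(4*V^3+6*V^2+12*V-4)*(V^2-2*V-2)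
   - 3*(-12*(V^4+2*V^3+6*V^2-4*V+4))*(2*V-2))/(V^2-2*V-2)^4.

Ltac nz0 := let Hc := fresh in intro Hc; repeat (match goal with H: _ * _ = 0 |- _ => apply Rmult_integral in H; destruct H end); nra.
Ltac nz := repeat split; try (first [ assumption | nz0 ]).
Lemma Rf_der V : V^2-2*V-2 < 0 -> is_derive Rf V (Rp V).
Proof. intros H. unfold Rf, Rp. auto_derive. nz. field. nz. Qed.
Lemma Rp_der V : V^2-2*V-2 < 0 -> is_derive Rp V (Rpd V).
Proof. intros H. unfold Rpd, Rp. auto_derive. nz. field. nz. Qed.
Lemma key V : V^2-2*V-2 < 0 -> Rpd V * (4 - 4*V^3) + Rp V * (-6*V^2) = -24 * Rf V ^2.
Proof. intros H. unfold Rpd, Rp, Rf. field. nz. Qed.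

Lemma sumsq0 x y : x * x + y * y = 0 -> x = 0.
Proof. intros. nra. Qed.

Lemma uniq (a b K : R) (y1 y2 z1 z2 : R -> R) :
  a < 0 < b -> 0 <= K ->
  (forall t, a < t < b -> is_derive y1 t (z1 t) /\ is_derive z1 t (-24 * y1 t ^ 2) /\
     is_derive y2 t (z2 t) /\ is_derive z2 t (-24 * y2 t ^ 2) /\
     Rabs (1 - 24 * (y1 t + y2 t)) <= K) ->
  y1 0 = y2 0 -> z1 0 = z2 0 -> forall t, a < t < b -> y1 t = y2 t.
Proof.
  intros Hab HK HD E0 E1 t Ht.
  set (m := fun s => (y1 s - y2 s) * (y1 s - y2 s) + (z1 s - z2 s) * (z1 s - z2 s)).
  assert (Dm : forall s, a < s < b -> is_derive m s
     (2 * (y1 s - y2 s) * (z1 s - z2 s) * (1 - 24 * (y1 s + y2 s)))).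
  { intros s Hs. destruct (HD s Hs) as [A1 [A2 [A3 [A4 _]]]].
    unfold m. eapply Dval.
    apply Dplus; apply Dmul; apply Dminus; eauto.
    simpl. ring. }
  assert (Hm : forall s, m s = (y1 s - y2 s) * (y1 s - y2 s) + (z1 s - z2 s) * (z1 s - z2 s)) by reflexivity.
  clearbody m.
  assert (Bd : forall s, a < s < b ->
     Rabs (2 * (y1 s - y2 s) * (z1 s - z2 s) * (1 - 24 * (y1 s + y2 s))) <= K * m s).
  { intros s Hs. destruct (HD s Hs) as [_ [_ [_ [_ A5]]]].
    rewrite Hm. set (d := y1 s - y2 s). set (d1 := z1 s - z2 s).
    set (c := 1 - 24 * (y1 s + y2 s)) in *.
    apply Rabs_le_between in A5. apply Rabs_le_between. destruct A5.
    clearbody d d1 c. clear -H H0 HK.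
assert (0 <= (K - c) * ((d + d1) * (d + d1))) by (apply Rmult_le_pos; [lra | apply Rle_0_sqr]).
    assert (0 <= (K + c) * ((d - d1) * (d - d1))) by (apply Rmult_le_pos; [lra | apply Rle_0_sqr]).
    assert (0 <= (K - c) * ((d - d1) * (d - d1))) by (apply Rmult_le_pos; [lra | apply Rle_0_sqr]).
    assert (0 <= (K + c) * ((d + d1) * (d + d1))) by (apply Rmult_le_pos; [lra | apply Rle_0_sqr]).
    split; nra. }
  assert (m0 : m 0 = 0). { rewrite Hm. rewrite E0, E1. ring. }
  assert (mpos : forall s, 0 <= m s). { intros s. rewrite Hm. apply Rplus_le_le_0_compat; apply Rle_0_sqr. }
  assert (mt : m t = 0).
  { destruct (Rle_or_lt 0 t) as [Hp|Hn].
    - set (phi := fun s => m s * exp (- K * s)).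
      assert (phi t <= phi 0).
      { apply (decr phi (fun s => 2 * (y1 s - y2 s) * (z1 s - z2 s) * (1 - 24 * (y1 s + y2 s)) * exp (- K * s) + m s * (- K * exp (- K * s)))); auto.
        - intros x Hx. unfold phi. eapply Dval. apply Dmul. apply Dm. lra.
          apply (Dcomp exp (fun s => - K * s)). apply is_derive_exp.
          auto_derive. auto. reflexivity. simpl. ring.
        - intros x Hx. assert (H1 := Bd x ltac:(lra)). apply Rabs_le_between in H1.
          assert (0 < exp (- K * x)) by apply exp_pos. nra. }
      unfold phi in H. clear phi. rewrite m0 in H. assert (0 < exp (- K * t)) by apply exp_pos.
      specialize (mpos t). nra.
    - set (phi := fun s => - (m s * exp (K * s))).
      assert (phi 0 <= phi t).
      { apply (decr phi (fun s => - (2 * (y1 s - y2 s) * (z1 s - z2 s) * (1 - 24 * (y1 s + y2 s)) * exp (K * s) + m s * (K * exp (K * s))))); [lra| |].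
        - intros x Hx. unfold phi. eapply Dval. apply Dopp. apply Dmul. apply Dm. lra.
          apply (Dcomp exp (fun s => K * s)). apply is_derive_exp.
          auto_derive. auto. reflexivity. simpl. ring.
        - intros x Hx. assert (H1 := Bd x ltac:(lra)). apply Rabs_le_between in H1.
          assert (0 < exp (K * x)) by apply exp_pos. nra. }
      unfold phi in H. clear phi. rewrite m0 in H. assert (0 < exp (K * t)) by apply exp_pos.
      specialize (mpos t). nra. }
  rewrite Hm in mt. apply sumsq0 in mt. lra.
Qed.

Lemma const_on (f : R -> R) a b c d : a < c < b -> a < d < b ->
  (forall x, a < x < b -> is_derive f x 0) -> f c = f d.
Proof.
  intros Hc Hd HD.
  assert (K : forall c d, a < c < b -> a < d < b -> c <= d -> f c = f d).
  { intros c0 d0 Hc0 Hd0 Hle.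
    assert (f d0 <= f c0).
    { apply (decr f (fun _ => 0)); [exact Hle | intros x Hx; apply HD; lra | intros; lra]. }
    assert (- f d0 <= - f c0).
    { apply (decr (fun t => - f t) (fun _ => - 0)); [exact Hle | intros x Hx; apply Dopp, HD; lra | intros; lra]. }
    lra. }
  destruct (Rle_or_lt c d). apply K; auto. symmetry; apply K; auto; lra.
Qed.

Lemma Rf_bound V : 0 < V <= 1 -> -7 <= Rf V <= 7.
Proof.
  intros HV.
  assert (H2 : V^2 <= 1) by nra. assert (H3 : V^3 <= 1) by nra. assert (H4 : V^4 <= 1) by nra.
  assert (P2 : 0 <= V^2) by nra. assert (P3 : 0 <= V^3) by nra. assert (P4 : 0 <= V^4) by nra.
  assert (HD : V^2 - 2*V - 2 <= -2) by nra.
  assert (Hq : 4 <= (V^2 - 2*V - 2)^2) by nra.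
  assert (E : Rf V * (V^2 - 2*V - 2)^2 = V^4+8*V^3+8*V-8).
  { unfold Rf. field. nz. }
  set (q := (V^2 - 2*V - 2)^2) in *. set (y := Rf V) in *. clearbody q y.
  split; nra.
Qed.

Lemma Rf_inv (c : R) : 1 <= c^2 ->
  Rf (/ c^2) = (1 + 8*c^2 + 8*c^6 - 8*c^8) / (2*c^2 + 2*c^4 - 1)^2.
Proof.
  intros Hc. assert (0 <= c^4) by nra. assert (0 <= (c*c)^2) by nra. unfold Rf. field. repeat split; intro; nra.
Qed.

Theorem mainTheorem11 (cleafh3 : R -> R) (Hc : is_cleafh 3 cleafh3) (l : R)
  (Hl : - eta 3 < 2 * l < eta 3) :
  let C := cleafh3 l in
  cleafh3 (2 * l) =
    (2 * C ^ 2 + 2 * C ^ 4 - 1) / sqrt (1 + 8 * C ^ 2 + 8 * C ^ 6 - 8 * C ^ 8).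
Proof.
  intros C. unfold C. clear C.
  destruct Hc as [H0 [H1 HD]].
  set (e := eta 3) in *.
  set (r := cleafh3) in *.
  set (r1 := Derive r) in *.
  assert (HD' : forall t, -e < t < e -> is_derive r t (r1 t) /\ is_derive r1 t (3 * r t ^ 5)).
  { intros t Ht. destruct (HD t Ht) as [A B]. split. apply Derive_correct; auto.
    eapply Dval. exact B. simpl. ring. }
  clear HD. clearbody r1 e r.
  assert (He : 0 < e) by lra.
  assert (En : forall t, -e < t < e -> r1 t ^ 2 = r t ^ 6 - 1).
  { intros t Ht.
    assert (Hk : forall x, -e < x < e -> is_derive (fun s => r1 s ^ 2 - r s ^ 6) x 0).
    { intros x Hx. destruct (HD' x Hx) as [A B]. eapply Dval. apply Dminus.
      apply (Dcomp (fun y => y ^ 2) r1 x (2 * r1 x)). auto_derive; auto; ring. exact B.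
      apply (Dcomp (fun y => y ^ 6) r x (6 * r x ^ 5)). auto_derive; auto; ring. exact A.
      ring. }
    assert (E := const_on _ (-e) e t 0 ltac:(lra) ltac:(lra) Hk). simpl in E.
    rewrite H0, H1 in E. lra. }
  assert (Rsq : forall t, -e < t < e -> 1 <= r t ^ 2).
  { intros t Ht. assert (E := En t Ht). assert (0 <= r1 t ^ 2) by nra.
    assert (0 <= r t ^ 2) by nra. set (x := r t ^ 2) in *.
    assert (r t ^ 6 = x ^ 3) by (unfold x; ring). clearbody x. nra. }
  assert (Rnz : forall t, -e < t < e -> r t <> 0).
  { intros t Ht Hz. assert (H := Rsq t Ht). rewrite Hz in H. lra. }
  assert (Cont : forall t, -e < t < e -> continuity_pt r t).
  { intros t Ht. apply derivable_continuous_pt. exists (r1 t). apply is_derive_Reals. apply HD'; auto. }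
  assert (Rpos : forall t, -e < t < e -> 0 < r t).
  { intros t Ht. destruct (Rlt_or_le 0 (r t)) as [P|N]; auto. exfalso.
    assert (N' : r t < 0) by (destruct N; auto; exfalso; apply (Rnz t Ht); auto).
    destruct (Rlt_or_le 0 t) as [Tp|Tn].
    - destruct (Ranalysis5.IVT_interv (fun s => - r s) 0 t) as [z [Hz1 Hz2]]; auto.
      + intros a Ha. apply derivable_continuous_pt. exists (- r1 a). apply is_derive_Reals.
        apply Dopp. apply HD'; lra.
      + rewrite H0; lra.
      + lra.
      + apply (Rnz z); [lra|]. lra.
    - assert (t <> 0) by (intro; subst; rewrite H0 in N'; lra).
      destruct (Ranalysis5.IVT_interv r t 0) as [z [Hz1 Hz2]]; auto.
      + intros a Ha. apply Cont; lra.
      + lra.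
      + rewrite H0; lra.
      + apply (Rnz z); [lra|]. lra. }
  pose (v := fun t => / (r t ^ 2)).
  pose (v1 := fun t => -2 * (r1 t * / (r t ^ 3))).
  assert (Dv : forall t, -e < t < e -> is_derive v t (v1 t)).
  { intros t Ht. destruct (HD' t Ht) as [A B]. assert (Z := Rnz t Ht).
    eapply Dval. apply (Dcomp (fun y => / y ^ 2) r t (-2 / r t ^ 3)).
    auto_derive. nz. field. auto. exact A. unfold v1. field. auto. }
  assert (Dv1 : forall t, -e < t < e -> is_derive v1 t (-6 * v t ^ 2)).
  { intros t Ht. destruct (HD' t Ht) as [A B]. assert (Z := Rnz t Ht). assert (E := En t Ht).
    eapply Dval. apply Dmul. apply is_derive_const. apply Dmul. exact B.
    apply (Dcomp (fun y => / y ^ 3) r t (-3 / r t ^ 4)).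
    auto_derive. nz. field. auto. exact A.
    replace (r1 t * (r1 t * (-3 / r t ^ 4))) with (-3 * r1 t ^ 2 / r t ^ 4) by (field; auto).
    rewrite E. unfold v. change zero with 0. field. auto. }
  assert (V1sq : forall t, -e < t < e -> v1 t ^ 2 = 4 - 4 * v t ^ 3).
  { intros t Ht. assert (Z := Rnz t Ht). assert (E := En t Ht). unfold v, v1.
    replace ((-2 * (r1 t * / r t ^ 3)) ^ 2) with (4 * r1 t ^ 2 / r t ^ 6) by (field; auto).
    rewrite E. field. auto. }
  assert (Vr : forall t, -e < t < e -> 0 < v t <= 1).
  { intros t Ht. assert (H := Rsq t Ht). unfold v. split.
    apply Rinv_0_lt_compat; lra. rewrite <- Rinv_1. apply Rinv_le_contravar; lra. }
  assert (Dneg : forall t, -e < t < e -> v t ^ 2 - 2 * v t - 2 < 0).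
  { intros t Ht. destruct (Vr t Ht). nra. }
  assert (Heq : v (2 * l) = Rf (v l)).
  { apply (uniq (- e / 2) (e / 2) 200 (fun t => v (2 * t)) (fun t => Rf (v t))
      (fun t => 2 * v1 (2 * t)) (fun t => Rp (v t) * v1 t)); [lra | lra | | | | lra].
    - intros t Ht. assert (Ht1 : -e < t < e) by lra. assert (Ht2 : -e < 2 * t < e) by lra.
      split; [|split; [|split; [|split]]].
      + eapply Dval. apply (Dcomp v (fun s => 2 * s) t (v1 (2 * t)) 2).
        apply Dv; auto. auto_derive; auto; ring. ring.
      + eapply Dval. apply Dmul. apply is_derive_const.
        apply (Dcomp v1 (fun s => 2 * s) t (-6 * v (2 * t) ^ 2) 2).
        apply Dv1; auto. auto_derive; auto; ring. change zero with 0. cbv beta. ring.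
      + eapply Dval. apply (Dcomp Rf v t (Rp (v t)) (v1 t)).
        apply Rf_der; auto. apply Dv; auto. ring.
      + eapply Dval. apply Dmul. apply (Dcomp Rp v t (Rpd (v t)) (v1 t)).
        apply Rp_der; auto. apply Dv; auto. apply Dv1; auto.
        replace (v1 t * Rpd (v t) * v1 t) with (Rpd (v t) * v1 t ^ 2) by ring.
        rewrite V1sq; auto. apply key; auto.
      + destruct (Vr _ Ht2). destruct (Rf_bound (v t) (Vr _ Ht1)).
        apply Rabs_le_between. lra.
    - replace (2 * 0) with 0 by ring. unfold v. rewrite H0. unfold Rf. simpl. field. 
    - replace (2 * 0) with 0 by ring. unfold v1. rewrite H1. ring. }
  assert (Hl1 : -e < l < e) by lra.
  assert (Hc1 := Rsq l Hl1).
  assert (HX := Rpos (2 * l) Hl).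
  unfold v in Heq. rewrite Rf_inv in Heq by exact Hc1.
  set (X := r (2 * l)) in *. set (c := r l) in *.
  clearbody X c.
  assert (HN : 0 < 2 * c ^ 2 + 2 * c ^ 4 - 1) by nra.
  set (N := 2 * c ^ 2 + 2 * c ^ 4 - 1) in *.
  set (P := 1 + 8 * c ^ 2 + 8 * c ^ 6 - 8 * c ^ 8) in *.
  clearbody N P.
  assert (EP : P = (N / X) ^ 2).
  { replace P with (N ^ 2 * (P / N ^ 2)) by (field; lra).
    rewrite <- Heq. field. lra. }
  rewrite EP. rewrite sqrt_pow2.
  field. split; lra.
  apply Rlt_le. apply Rdiv_lt_0_compat; lra.
Qed.
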